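(* Let $X$ be a set, $B=(B,+,0)$ a unitary magma and $(A,k,q,s,p)$ a retraction point from $X$ to $B$. Then the map $\langle q,p\rangle\colon A\to X\times B$, $a\mapsto(q(a),p(a))$, is a bijection if and only if $q(k(x)+s(b))=x$ for all $x\in X$ and $b\in B$.
   Context: A unitary magma is a set with a binary operation $+$ and an element $0$ with $b+0=b=0+b$ for all $b$; morphisms preserve $+$ and $0$. Given a set $X$ and a unitary magma $B$, a retraction point from $X$ to $B$ is a tuple $(A,k,q,s,p)$ where $A=(A,+,0)$ is a unitary magma, $k\colon X\to A$ and $q\colon A\to X$ are maps, $s\colon B\to A$ and $p\colon A\to B$ are morphisms of unitary magmas, and $p(s(b))=b$, $q(k(x))=x$, $p(k(x))=0$, $q(s(b))=q(0)$, and $k(q(a))+s(p(a))=a$ for all $x\in X$, $b\in B$, $a\in A$. *)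

(* Defs.v *)
Record UnitaryMagma := {
  um_carrier :> Type;
  um_op : um_carrier -> um_carrier -> um_carrier;
  um_zero : um_carrier;
  um_op_zero_r : forall b, um_op b um_zero = b;
  um_zero_op_l : forall b, um_op um_zero b = b
}.

Arguments um_op {_} _ _.
Arguments um_zero {_}.

Definition is_um_morphism (M N : UnitaryMagma) (f : M -> N) : Prop :=
  (forall a b, f (um_op a b) = um_op (f a) (f b)) /\ f um_zero = um_zero.

Definition is_retraction_point (X : Type) (B A : UnitaryMagma)
  (k : X -> A) (q : A -> X) (s : B -> A) (p : A -> B) : Prop :=
  is_um_morphism B A s /\ is_um_morphism A B p /\
  (forall b, p (s b) = b) /\
  (forall x, q (k x) = x) /\
  (forall x, p (k x) = um_zero) /\
  (forall b, q (s b) = q um_zero) /\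
  (forall a, um_op (k (q a)) (s (p a)) = a).

Definition bijective_map {U V : Type} (f : U -> V) : Prop :=
  (forall u1 u2, f u1 = f u2 -> u1 = u2) /\ (forall v, exists u, f u = v).

(* Main.v *)
Require Import Defs.

Theorem proposition2p2 (X : Type) (B A : UnitaryMagma)
  (k : X -> A) (q : A -> X) (s : B -> A) (p : A -> B) :
  is_retraction_point X B A k q s p ->
  (bijective_map (fun a : A => (q a, p a)) <->
   (forall (x : X) (b : B), q (um_op (k x) (s b)) = x)).
Proof.
  intros [[sop s0] [[pop p0] [ps [qk [pk [qs dec]]]]]].
  split.
  - intros [inj sur] x b.
    destruct (sur (x, b)) as [a' Ha']. injection Ha' as H1 H2.
    rewrite <- H1, <- H2, dec. reflexivity.
  - intros H. split.
    + intros u1 u2 E. injection E as E1 E2.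
      rewrite <- (dec u1), <- (dec u2), E1, E2. reflexivity.
    + intros [x b]. exists (um_op (k x) (s b)).
      rewrite H, pop, pk, ps, um_zero_op_l. reflexivity.
Qed.
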